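(* Let $A_1,\ldots,A_d$ be Hermitian $n\times n$ matrices such that the quadric $M_H=\{\Re e\, w_j={}^t\bar zA_jz,\ j=1,\dots,d\}\subset\mathbb C^{n+d}$ is strongly pseudoconvex, and let $b\in\mathbb R^d$ with $\sum_j b_jA_j$ invertible. For $a\in\mathbb C^d$ near $0$ put $P(a)=\sum_{j}a_jA_j$, $A(a)=\sum_j(b_j-a_j-\overline{a_j})A_j$, and let $X(a)$ be the unique $n\times n$ matrix with $\|X(a)\|<1$ solving $$P(a)X^2+A(a)X+{}^t\overline{P(a)}=0.$$ Let $a_0\in\mathbb R^d$ be small enough, and assume coordinates are chosen (by a linear change) so that $A(a_0)=\sum_j(b_j-2a_{0,j})A_j=I$. Write $P=P(a_0)$, $X=X(a_0)$ and let $\varphi:\mathcal M_n(\mathbb C)\to\mathcal M_n(\mathbb C)$, $\varphi(N)=N+P(NX+XN)$ (which is invertible for $a_0$ small). Then for every $s=1,\ldots,d$, $$\frac{\partial X}{\partial\,\Re e\, a_s}(a_0)=\varphi^{-1}\big(-A_s(I-X)^2\big)=-\varphi^{-1}(A_s)(I-X)^2.$$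
   Context: $M_H$ strongly pseudoconvex means there is $c\in\mathbb R^d$ with $\sum_j c_jA_j$ positive definite. $\mathcal M_n(\mathbb C)$ denotes complex $n\times n$ matrices. *)

(* Defs.v *)
From HB Require Import structures.
From mathcomp Require Import all_boot all_order all_algebra.
From mathcomp Require Import all_classical all_reals all_analysis.
From mathcomp Require Import complex.
Set Implicit Arguments. Unset Strict Implicit. Unset Printing Implicit Defensive.
Import Order.TTheory GRing.Theory Num.Theory.
Local Open Scope ring_scope.
Local Open Scope complex_scope.

Section Defs.
Variable R : realType.
Local Notation C := R[i].

Definition rC (x : R) : C := x%:C.

Definition adjmx (m n : nat) (M : 'M[C]_(m, n)) : 'M[C]_(n, m) :=
  (map_mx (fun z : C => z^*) M)^T.

Definition is_hermitian (n : nat) (M : 'M[C]_n) : Prop := adjmx M = M.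

(* positive definite: v^* M v > 0 for every nonzero v (as a complex number,
   i.e. real and positive) *)
Definition posdef (n : nat) (M : 'M[C]_n) : Prop :=
  forall v : 'cV[C]_n, v != 0 -> 0 < (adjmx v *m M *m v) ord0 ord0.

Definition lincomb (d n : nat) (c : 'I_d -> C) (A : 'I_d -> 'M[C]_n) : 'M[C]_n :=
  \sum_(j < d) c j *: A j.

(* M_H strongly pseudoconvex: some real combination of the A_j is positive definite *)
Definition strongly_pseudoconvex (d n : nat) (A : 'I_d -> 'M[C]_n) : Prop :=
  exists c : 'I_d -> R, posdef (lincomb (fun j => (c j)%:C) A).

Definition cabs (z : C) : R := Num.sqrt (complex.Re z ^+ 2 + complex.Im z ^+ 2).

Definition vnorm (n : nat) (v : 'cV[C]_n) : R :=
  Num.sqrt (\sum_(i < n) (complex.Re (v i ord0) ^+ 2 + complex.Im (v i ord0) ^+ 2)).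

Definition opnorm (n : nat) (M : 'M[C]_n) : R :=
  sup [set vnorm (M *m v) | v in [set v : 'cV[C]_n | vnorm v <= 1]].

Definition Pa (d n : nat) (A : 'I_d -> 'M[C]_n) (a : 'I_d -> C) : 'M[C]_n :=
  lincomb a A.

Definition Aa (d n : nat) (A : 'I_d -> 'M[C]_n) (b : 'I_d -> R) (a : 'I_d -> C)
  : 'M[C]_n := lincomb (fun j => (b j)%:C - a j - (a j)^*) A.

Definition solves_eq (d n : nat) (A : 'I_d -> 'M[C]_n) (b : 'I_d -> R)
  (a : 'I_d -> C) (Y : 'M[C]_n) : Prop :=
  Pa A a *m (Y *m Y) + Aa A b a *m Y + adjmx (Pa A a) = 0.

Definition phimap (n : nat) (P X : 'M[C]_n) (N : 'M[C]_n) : 'M[C]_n :=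
  N + P *m (N *m X + X *m N).

Definition shift_re (d : nat) (a0 : 'I_d -> R) (s : 'I_d) (t : R) : 'I_d -> C :=
  fun j => (a0 j + (if j == s then t else 0))%:C.

(* Y : R -> 'M[C]_n is differentiable at 0 with derivative D : the real and
   imaginary parts of every entry are differentiable at 0 with the corresponding
   parts of D as derivatives (derivative along the real direction 1). *)
Definition mx_has_derive0 (n : nat) (Y : R -> 'M[C]_n) (D : 'M[C]_n) : Prop :=
  forall i j : 'I_n,
    is_derive (0 : R) (1 : R) (fun t => complex.Re (Y t i j)) (complex.Re (D i j)) /\
    is_derive (0 : R) (1 : R) (fun t => complex.Im (Y t i j)) (complex.Im (D i j)).

End Defs.

(* Main.v *)
Require Import Defs.
From HB Require Import structures.
From mathcomp Require Import all_boot all_order all_algebra.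
From mathcomp Require Import all_classical all_reals all_analysis.
From mathcomp Require Import complex.
From mathcomp Require Import ring lra.
Import Order.TTheory GRing.Theory Num.Theory.
Import numFieldNormedType.Exports.
Local Open Scope classical_set_scope.
Local Open Scope ring_scope.
Local Open Scope complex_scope.
Set Implicit Arguments. Unset Strict Implicit. Unset Printing Implicit Defensive.

Lemma deriv_quad (R : realType) (f : R -> R) (L c r : R) : 0 < r -> 0 < c ->
  (forall t, `|t| < r -> `|f t - f 0 - t * L| <= c * t ^+ 2) -> is_derive (0:R) (1:R) f L.
Proof.
move=> r0 cp H.
have cv : (fun h : R => h^-1 *: ((f \o shift 0) (h *: 1) - f 0)) @ 0^' --> L.
  apply/cvgrPdist_lt => e e0.
  near=> h.
  have h0 : h != 0 by near: h; exact: nbhs_dnbhs_neq.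
  have hr : `|h| < r by near: h; exact: dnbhs0_lt.
  have hc : `|h| < e / c by near: h; apply: dnbhs0_lt; exact: divr_gt0.
  have {hc} hc : c * `|h| < e.
    by rewrite -(ltr_pM2l cp) mulrCA divff ?gt_eqF // mulr1 in hc.
  rewrite /= scaler1 /shift addr0.
  have -> : L - h^-1 *: (f h - f 0) = - (h^-1 * (f h - f 0 - h * L)).
    rewrite /GRing.scale /=; field; exact: h0.
  rewrite normrN normrM normrV ?unitfE //.
  have Hh := H h hr.
  apply: (le_lt_trans _ hc).
  rewrite ler_pdivrMl ?normr_gt0 //.
  by rewrite mulrCA -expr2 real_normK ?num_real.
constructor; first by apply/cvg_ex; exists L.
exact: cvg_lim.
Unshelve. all: by end_near. Qed.

Lemma key (R : pzRingType) (P B X E : R) :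
  (P + B) * ((X + E) * (X + E)) + (1 - (B + B)) * (X + E) + (P + B) = 0 ->
  P * (X * X) + X + P = 0 ->
  E + P * (E * X + X * E) = - (B * ((1 - (X + E)) * (1 - (X + E)))) - P * (E * E).
Proof.
move=> Ht H0.
have E1 : (E + P * (E * X + X * E) - (- (B * ((1 - (X + E)) * (1 - (X + E)))) - P * (E * E)))
   + (P * (X * X) + X + P) = 
  (P + B) * ((X + E) * (X + E)) + (1 - (B + B)) * (X + E) + (P + B).
  rewrite !(mulrBl, mulrBr, mulrDl, mulrDr, mul1r, mulr1, mulrA, mulrN, mulNr, opprB, opprD, opprK, addrA).
  by rewrite [LHS](ACl (14*2*12*10*3*4*13*11*15*1*6*7*8*9*16*5)).
by move: E1; rewrite Ht H0 addr0 => /eqP; rewrite subr_eq0 => /eqP.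
Qed.

Section Surj.
Variables (R : realType) (m : nat) (P X0 : 'M[R[i]]_m).
Lemma phimap_linear : linear (phimap P X0).
Proof.
move=> a x y; rewrite /phimap.
rewrite !mulmxDl !mulmxDr -!scalemxAl -!scalemxAr.
by rewrite !scalerDr !addrA [LHS](ACl (1*3*5*2*4*6)).
Qed.
HB.instance Definition _ := GRing.isLinear.Build R[i] 'M[R[i]]_m 'M[R[i]]_m *:%R (phimap P X0) phimap_linear.
Lemma phimap_surj : injective (phimap P X0) -> forall Y, exists N, phimap P X0 N = Y.
Proof.
move=> inj Y; pose f := linfun (phimap P X0).
have kf : lker f == 0%VS.
  by apply/lker0P => x y; rewrite !lfunE; apply: inj.
exists ((f^-1)%VF Y).
by rewrite -(lfunE (phimap P X0)) lker0_lfunVK.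
Qed.
End Surj.

Section Norms.
Variable R : realType.
Local Notation C := R[i].

Definition nc (z : C) : R := cabs z.

Lemma ncE (z : C) : nc z = ComplexField.Normc.normc z.
Proof. by case: z. Qed.

Lemma nc_ge0 z : 0 <= nc z.
Proof. exact: sqrtr_ge0. Qed.

Lemma ncD z w : nc (z + w) <= nc z + nc w.
Proof. by rewrite !ncE; apply: le_normcD. Qed.

Lemma ncN z : nc (- z) = nc z.
Proof. by rewrite !ncE; apply: normcN. Qed.

Lemma ncM z w : nc (z * w) = nc z * nc w.
Proof. by rewrite !ncE; apply: ComplexField.Normc.normcM. Qed.

Lemma nc0 : nc 0 = 0.
Proof. by rewrite ncE ComplexField.Normc.normc0. Qed.

Lemma nc_eq0 z : nc z = 0 -> z = 0.
Proof. by rewrite ncE; apply: ComplexField.Normc.eq0_normc. Qed.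

Lemma ncR (x : R) : nc (x%:C) = `|x|.
Proof. by rewrite /nc /cabs /= expr0n /= addr0 sqrtr_sqr. Qed.

Lemma ncRe z : `|complex.Re z| <= nc z.
Proof.
rewrite /nc /cabs -sqrtr_sqr; apply: ler_wsqrtr.
by rewrite lerDl sqr_ge0.
Qed.

Lemma ncIm z : `|complex.Im z| <= nc z.
Proof.
rewrite /nc /cabs -sqrtr_sqr; apply: ler_wsqrtr.
by rewrite lerDr sqr_ge0.
Qed.

Lemma nc_sum (I : finType) (F : I -> C) : nc (\sum_i F i) <= \sum_i nc (F i).
Proof.
elim/big_ind2: _ => //; first by rewrite nc0.
move=> x1 x2 y1 y2 h1 h2; apply: le_trans (ncD _ _) _; exact: lerD.
Qed.

Definition mn p q (M : 'M[C]_(p, q)) : R := \sum_i \sum_j nc (M i j).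

Lemma mn_ge0 p q (M : 'M[C]_(p, q)) : 0 <= mn M.
Proof. by apply: sumr_ge0 => i _; apply: sumr_ge0 => j _; apply: nc_ge0. Qed.

Lemma mnD p q (M N : 'M[C]_(p, q)) : mn (M + N) <= mn M + mn N.
Proof.
rewrite /mn -big_split; apply: ler_sum => i _; rewrite -big_split.
by apply: ler_sum => j _; rewrite mxE; apply: ncD.
Qed.

Lemma mnN p q (M : 'M[C]_(p, q)) : mn (- M) = mn M.
Proof. by apply: eq_bigr => i _; apply: eq_bigr => j _; rewrite mxE ncN. Qed.

Lemma mnB p q (M N : 'M[C]_(p, q)) : mn (M - N) <= mn M + mn N.
Proof. by rewrite -(mnN N); apply: mnD. Qed.

Lemma mnZ p q c (M : 'M[C]_(p, q)) : mn (c *: M) = nc c * mn M.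
Proof.
rewrite /mn mulr_sumr; apply: eq_bigr => i _; rewrite mulr_sumr.
by apply: eq_bigr => j _; rewrite mxE ncM.
Qed.

Lemma mn_entry p q (M : 'M[C]_(p, q)) i j : nc (M i j) <= mn M.
Proof.
rewrite /mn (bigD1 i) //= (bigD1 j) //= -addrA lerDl.
apply: addr_ge0; first by apply: sumr_ge0 => k _; apply: nc_ge0.
by apply: sumr_ge0 => k _; apply: sumr_ge0 => l _; apply: nc_ge0.
Qed.

Lemma mn_eq0 p q (M : 'M[C]_(p, q)) : mn M <= 0 -> M = 0.
Proof.
move=> h; apply/matrixP => i j; rewrite mxE; apply: nc_eq0.
by apply/eqP; rewrite eq_le nc_ge0 andbT; apply: le_trans h; apply: mn_entry.
Qed.

Lemma mnM p q r (M : 'M[C]_(p, q)) (N : 'M[C]_(q, r)) : mn (M *m N) <= mn M * mn N.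
Proof.
rewrite /mn mulr_suml; apply: ler_sum => i _.
apply: (@le_trans _ _ (\sum_k \sum_j nc (M i j) * nc (N j k))).
  by apply: ler_sum => k _; rewrite mxE; apply: le_trans (nc_sum _) _;
     apply: ler_sum => j _; rewrite ncM.
rewrite exchange_big /= mulr_suml; apply: ler_sum => j _.
rewrite -mulr_sumr; apply: ler_wpM2l; first exact: nc_ge0.
rewrite (bigD1 j) //= lerDl.
by apply: sumr_ge0 => k _; apply: sumr_ge0 => l _; apply: nc_ge0.
Qed.

Lemma mn1 k : mn (1%:M : 'M[C]_k) = k%:R.
Proof.
rewrite /mn -[k in RHS]card_ord -sumr_const; apply: eq_bigr => i _.
rewrite (bigD1 i) //= big1 ?addr0; first by rewrite mxE eqxx /= ncR normr1.
by move=> j /negbTE ji; rewrite mxE eq_sym ji /= nc0.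
Qed.


Lemma nc_sqr (z : C) : nc z ^+ 2 = complex.Re z ^+ 2 + complex.Im z ^+ 2.
Proof. by rewrite /nc /cabs sqr_sqrtr // addr_ge0 ?sqr_ge0. Qed.

Lemma vnorm_entry m (v : 'cV[C]_m) i : nc (v i ord0) <= vnorm v.
Proof.
rewrite /vnorm {1}/nc /cabs; apply: ler_wsqrtr.
rewrite (bigD1 i) //= lerDl; apply: sumr_ge0 => k _.
by apply: addr_ge0; apply: sqr_ge0.
Qed.

Lemma mn_col m (v : 'cV[C]_m) : mn v = \sum_i nc (v i ord0).
Proof. by apply: eq_bigr => i _; rewrite big_ord1. Qed.

Lemma vnorm_le_mn m (v : 'cV[C]_m) : vnorm v <= mn v.
Proof.
rewrite /vnorm -(ger0_norm (mn_ge0 v)) -sqrtr_sqr; apply: ler_wsqrtr.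
rewrite expr2 {2}mn_col mulr_sumr; apply: ler_sum => i _.
rewrite -nc_sqr expr2 mulrC; apply: ler_wpM2r; first exact: nc_ge0.
exact: mn_entry.
Qed.

Lemma mn_le_vnorm m (v : 'cV[C]_m) : mn v <= m%:R * vnorm v.
Proof.
have -> : (m%:R : R) = \sum_(i < m) 1 by rewrite sumr_const card_ord.
rewrite mn_col mulr_suml; apply: ler_sum => i _.
by rewrite mul1r; apply: vnorm_entry.
Qed.

Lemma opnorm_entry m (Y : 'M[C]_m) : opnorm Y < 1 -> forall i j, nc (Y i j) <= 1.
Proof.
move=> hY i j; move: hY; rewrite /opnorm; set S := (X in sup X) => hY.
have hS : has_ubound S.
  exists (mn Y * (m%:R * 1)) => _ [v /= hv <-].
  apply: le_trans (vnorm_le_mn _) _; apply: le_trans (mnM _ _) _.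
  apply: ler_wpM2l; first exact: mn_ge0.
  apply: le_trans (mn_le_vnorm _) _; apply: ler_wpM2l => //.
have hd : vnorm (delta_mx j ord0 : 'cV[C]_m) <= 1.
  apply: le_trans (vnorm_le_mn _) _; rewrite mn_col (bigD1 j) //= big1 ?addr0.
    by rewrite mxE !eqxx /= ncR normr1.
  by move=> k /negbTE kj; rewrite mxE kj /= nc0.
have hSd : S (vnorm (Y *m delta_mx j ord0)) by exists (delta_mx j ord0).
have := ub_le_sup hS hSd.
move=> hle.
apply: le_trans (ltW (le_lt_trans hle hY)).
by rewrite -colE; have := vnorm_entry (col j Y) i; rewrite mxE.
Qed.

Lemma opnorm_mn m (Y : 'M[C]_m) : opnorm Y < 1 -> mn Y <= (m ^ 2)%:R.
Proof.
move=> hY; rewrite natrX expr2.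
have -> : (m%:R : R) = \sum_(i < m) 1 by rewrite sumr_const card_ord.
rewrite /mn mulr_suml.
apply: ler_sum => i _; rewrite mul1r.
by apply: ler_sum => j _; apply: opnorm_entry.
Qed.

End Norms.

Section Lin.
Variables (R : realType) (d n : nat) (A : 'I_d -> 'M[R[i]]_n).

Lemma conjR (x : R) : Num.conj (x%:C : R[i]) = x%:C.
Proof. by apply: conj_Creal; rewrite complex_real. Qed.

Lemma adj_real (x : 'I_d -> R) : (forall j, is_hermitian (A j)) ->
  adjmx (lincomb (fun j => rC (x j)) A) = lincomb (fun j => rC (x j)) A.
Proof.
move=> hA; apply/matrixP => i k.
rewrite /adjmx !mxE /lincomb !summxE rmorph_sum; apply: eq_bigr => j _.
rewrite !mxE rmorphM /= oppr0.
have hj : adjmx (A j) = A j := hA j.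
by have := congr1 (fun M : 'M[R[i]]_n => M i k) hj; rewrite /adjmx !mxE /= => ->.
Qed.

Lemma lincomb_shift (a0 : 'I_d -> R) s t :
  lincomb (fun j => rC (a0 j + (if j == s then t else 0))) A =
  lincomb (fun j => rC (a0 j)) A + t%:C *: A s.
Proof.
rewrite /lincomb; under eq_bigr do rewrite /rC rmorphD scalerDl.
rewrite big_split /=; congr (_ + _).
rewrite (bigD1 s) //= eqxx big1 ?addr0 // => j /negbTE ->.
by rewrite rmorph0 scale0r.
Qed.

Lemma Aa_shift (b : 'I_d -> R) (a0 : 'I_d -> R) s t :
  Aa A b (shift_re a0 s t) =
  Aa A b (fun j => rC (a0 j)) - (t%:C *: A s + t%:C *: A s).
Proof.
rewrite /Aa /lincomb /shift_re /rC.
have -> : \sum_(j < d) ((b j)%:C - (a0 j + (if j == s then t else 0))%:C -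
        ((a0 j + (if j == s then t else 0))%:C)^*) *: A j =
   \sum_(j < d) (((b j)%:C - (a0 j)%:C - ((a0 j)%:C)^*) *: A j -
        ((if j == s then t else 0)%:C + (if j == s then t else 0)%:C) *: A j).
  apply: eq_bigr => j _; rewrite -scalerBl; congr (_ *: _).
  rewrite !conjR !rmorphD /=; ring.
rewrite sumrB; congr (_ - _).
rewrite (bigD1 s) //= eqxx big1 ?addr0; first by rewrite scalerDl.
by move=> j /negbTE ->; rewrite rmorph0 addr0 scale0r.
Qed.

Lemma mn_sum (I : finType) (F : I -> 'M[R[i]]_n) : mn (\sum_i F i) <= \sum_i mn (F i).
Proof.
elim/big_ind2: _ => //.
  by rewrite /mn big1 // => i _; rewrite big1 // => j _; rewrite mxE nc0.
move=> x1 x2 y1 y2 h1 h2; apply: le_trans (mnD _ _) _; exact: lerD.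
Qed.

Lemma mn_lincomb (x : 'I_d -> R) :
  mn (lincomb (fun j => rC (x j)) A) <= \sum_j `|x j| * mn (A j).
Proof.
apply: le_trans (mn_sum _) _; apply: ler_sum => j _.
by rewrite mnZ ncR.
Qed.
End Lin.

Unset Implicit Arguments.

Lemma ReL (R : realType) (x y z : R[i]) (t : R) :
  complex.Re (x - y - t%:C * z) = complex.Re x - complex.Re y - t * complex.Re z.
Proof. case: x => a b; case: y => c e; case: z => f g /=. ring. Qed.
Lemma ImL (R : realType) (x y z : R[i]) (t : R) :
  complex.Im (x - y - t%:C * z) = complex.Im x - complex.Im y - t * complex.Im z.
Proof. case: x => a b; case: y => c e; case: z => f g /=. ring. Qed.

Lemma key' (R : pzRingType) (P B X Y : R) :
  (P + B) * (Y * Y) + (1 - (B + B)) * Y + (P + B) = 0 ->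
  P * (X * X) + X + P = 0 ->
  (Y - X) + P * ((Y - X) * X + X * (Y - X)) =
   - (B * ((1 - Y) * (1 - Y))) - P * ((Y - X) * (Y - X)).
Proof.
move=> h1 h2; have e : X + (Y - X) = Y by rewrite addrC subrK.
by move: (@key R P B X (Y - X)); rewrite e => H; apply: H.
Qed.

Lemma sqdiff (R : pzRingType) (U V : R) : U * U - V * V = U * (U - V) + (U - V) * V.
Proof. by rewrite mulrBr mulrBl addrA subrK. Qed.

Lemma realE1 (R : realType) (e p K0 Q F : R) : 0 <= Q ->
  e <= 2 * F -> F <= Q + p * (e * e) -> p * (e * e) <= p * (e * (2 * K0)) ->
  p * K0 * e <= 16^-1 * e -> e <= 3 * Q.
Proof. move=> *; lra. Qed.

Lemma realE2 (R : realType) (g F x1 x2 y1 y2 y3 z : R) :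
  g <= 2 * F -> F <= x1 + y1 -> x1 <= x2 -> y1 <= y2 -> y2 <= y3 -> 0 <= z ->
  g <= 2 * (x2 + y3) + z.
Proof. move=> *; lra. Qed.

Lemma h_pos1 (R : realType) (x : R) : 0 <= x -> 0 < x + 1.
Proof. move=> *; lra. Qed.
Lemma h_half (R : realType) (e : R) : 0 < e -> e / 2 < e.
Proof. move=> *; lra. Qed.
Lemma h_16 (R : realType) : 0 < (16 : R).
Proof. lra. Qed.
Lemma h_inv (R : realType) (S K : R) : 0 < S -> 0 <= K ->
  (16 * S * (K + 1))^-1 * S * (K + 1) = 16^-1.
Proof. move=> *; field; lra. Qed.
Lemma h_P1 (R : realType) (p K x : R) : 0 <= p -> 0 <= K -> p * (K + 1) <= x ->
  p * K <= x /\ p <= x.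
Proof. move=> *; split; nra. Qed.
Lemma h_phi (R : realType) (m F G p K : R) : 0 <= m ->
  m <= F + G -> G <= p * (m * K + K * m) -> p * K * m <= 16^-1 * m -> m <= 2 * F.
Proof. move=> *; lra. Qed.
Lemma h_sum (R : realType) (x y z e : R) : x < e / 2 -> y <= z -> z < e / 2 -> x + y < e.
Proof. move=> *; lra. Qed.
Lemma h_le1 (R : realType) (p : R) : p <= 16^-1 -> p <= 1.
Proof. move=> *; lra. Qed.

Theorem lemma4p1 (R : realType) (d n : nat)
  (A : 'I_d -> 'M[R[i]]_n) (b : 'I_d -> R)
  (X : ('I_d -> R[i]) -> 'M[R[i]]_n) :
  (forall j, is_hermitian (A j)) ->
  strongly_pseudoconvex A ->
  lincomb (fun j => rC (b j)) A \in unitmx ->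
  (* X(a) is, for a near 0, the unique matrix of norm < 1 solving the equation *)
  (exists2 eps : R, 0 < eps &
     forall a : 'I_d -> R[i], (forall j, cabs (a j) < eps) ->
       [/\ opnorm (X a) < 1, solves_eq A b a (X a) &
           forall Y : 'M[R[i]]_n, opnorm Y < 1 -> solves_eq A b a Y -> Y = X a]) ->
  exists2 delta : R, 0 < delta &
    forall a0 : 'I_d -> R, (forall j, `|a0 j| < delta) ->
      Aa A b (fun j => rC (a0 j)) = 1%:M ->
      let P := Pa A (fun j => rC (a0 j)) in
      let X0 := X (fun j => rC (a0 j)) in
      forall s : 'I_d,
        exists D : 'M[R[i]]_n,
          [/\ mx_has_derive0 (fun t => X (shift_re a0 s t)) D,
              injective (phimap P X0),
              phimap P X0 D = - (A s *m ((1%:M - X0) *m (1%:M - X0))) &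
              exists2 N : 'M[R[i]]_n, phimap P X0 N = A s &
                D = - (N *m ((1%:M - X0) *m (1%:M - X0)))].
Proof.
move=> hA _ _ [eps eps0 hX].
pose K0 : R := (n ^ 2)%:R.
pose SA : R := \sum_j mn (A j) + 1.
have K0ge : 0 <= K0 by rewrite /K0 ler0n.
have sAge : 0 <= \sum_j mn (A j) by apply: sumr_ge0 => j _; apply: mn_ge0.
have SAgt : 0 < SA by apply: h_pos1.
have mAs : forall s, mn (A s) <= SA.
  move=> s; rewrite /SA (bigD1 s) //= -addrA lerDl; apply: addr_ge0 => //.
  by apply: sumr_ge0 => j _; apply: mn_ge0.
pose r0 : R := (16 * SA * (K0 + 1))^-1.
have r0gt : 0 < r0.
  by rewrite /r0 invr_gt0; apply: mulr_gt0; [apply: mulr_gt0 => //; apply: h_16|apply: h_pos1].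
exists (Num.min (eps / 2) r0).
  by rewrite lt_min r0gt andbT; apply: divr_gt0.
move=> a0 ha0 hAa P X0 s.
have ha0e : forall j, `|a0 j| < eps / 2.
  by move=> j; move: (ha0 j); rewrite lt_min => /andP[].
have ha0r : forall j, `|a0 j| < r0.
  by move=> j; move: (ha0 j); rewrite lt_min => /andP[].
have hX0 : forall j, cabs (rC (a0 j)) < eps.
  move=> j; change (nc (a0 j)%:C < eps); rewrite ncR.
  by apply: lt_trans (ha0e j) _; apply: h_half.
have [opX0 solX0 _] := hX _ hX0.
have mX0 : mn X0 <= K0 := opnorm_mn opX0.
have adjP : adjmx P = P := adj_real a0 hA.
have eq0 : P * (X0 * X0) + X0 + P = 0.
  by move: solX0; rewrite /solves_eq hAa mul1mx adjP -!mulmxE.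
pose p := mn P.
have p0 : 0 <= p := mn_ge0 P.
have hp : p <= r0 * SA.
  apply: le_trans (mn_lincomb _ _) _.
  rewrite /SA mulrDr mulr1 mulr_sumr.
  have : \sum_j `|a0 j| * mn (A j) <= \sum_j r0 * mn (A j).
    by apply: ler_sum => j _; apply: ler_wpM2r; [apply: mn_ge0 | apply: ltW].
  by move=> h; apply: le_trans h _; rewrite lerDl; apply: ltW.
have hr0 : r0 * SA * (K0 + 1) = 16^-1 by apply: h_inv.
have hp1 : p * K0 <= 16^-1.
  have : p * (K0 + 1) <= 16^-1.
    by rewrite -hr0; apply: ler_wpM2r => //; apply: addr_ge0.
  by move/(h_P1 _ _ _ _ p0 K0ge) => [].
have hp2 : p <= 16^-1.
  have : p * (K0 + 1) <= 16^-1.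
    by rewrite -hr0; apply: ler_wpM2r => //; apply: addr_ge0.
  by move/(h_P1 _ _ _ _ p0 K0ge) => [].
have mn0 : mn (0 : 'M[R[i]]_n) = 0.
  by rewrite /mn big1 // => i _; rewrite big1 // => j _; rewrite mxE nc0.
have phiB : forall N, mn N <= 2 * mn (phimap P X0 N).
  move=> N.
  have h1 : mn (phimap P X0 N - N) <= p * (mn N * K0 + K0 * mn N).
    rewrite /phimap addrC addKr; apply: le_trans (mnM _ _) _.
    apply: ler_wpM2l => //; apply: le_trans (mnD _ _) _.
    apply: lerD; apply: le_trans (mnM _ _) _.
      by apply: ler_wpM2l => //; apply: mn_ge0.
    by apply: ler_wpM2r => //; apply: mn_ge0.
  have h2 : mn N <= mn (phimap P X0 N) + mn (phimap P X0 N - N).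
    have e : N = phimap P X0 N - (phimap P X0 N - N) by rewrite opprB addrC subrK.
    by rewrite {1}e; apply: mnB.
  have h3 := ler_wpM2r (mn_ge0 N) hp1.
  have h4 := mn_ge0 N.
  exact: (h_phi _ _ _ _ _ _ h4 h2 h1 h3).
have inj : injective (phimap P X0).
  move=> x y hxy; apply/eqP; rewrite -subr_eq0; apply/eqP; apply: mn_eq0.
  by have := phiB (x - y); rewrite linearB /= hxy subrr mn0 mulr0.
pose W := (1%:M - X0) *m (1%:M - X0).
have [D hD] := @phimap_surj _ _ P X0 inj (- (A s *m W)).
have [N hN] := @phimap_surj _ _ P X0 inj (A s).
have hW : X0 *m W = W *m X0.
  have h : X0 *m (1%:M - X0) = (1%:M - X0) *m X0.
    by rewrite mulmxBr mulmxBl mulmx1 mul1mx.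
  by rewrite /W mulmxA h -mulmxA h mulmxA.
have comm : forall M, phimap P X0 (M *m W) = phimap P X0 M *m W.
  move=> M; rewrite /phimap mulmxDl -(mulmxA P) mulmxDl -(mulmxA M W X0) -hW.
  by rewrite !mulmxA.
have hND : D = - (N *m W).
  by apply: inj; rewrite hD linearN /= comm hN.

pose Kn : R := n%:R + K0.
have Kn0 : 0 <= Kn by rewrite /Kn; apply: addr_ge0 => //; apply: ler0n.
have mU : forall Y : 'M[R[i]]_n, mn Y <= K0 -> mn (1%:M - Y) <= Kn.
  by move=> Y hY; apply: le_trans (mnB _ _) _; rewrite mn1 /Kn lerD2l.
have sh0 : shift_re a0 s 0 = (fun j => rC (a0 j)).
  by apply/funext => j; rewrite /shift_re; case: ifP; rewrite addr0.
pose C1 : R := Kn * Kn.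
pose cc : R := 6 * SA * SA * C1 * (2 * Kn) + 18 * SA * SA * C1 * C1 + 1.
have bnd : forall t, `|t| < eps / 2 ->
    mn (X (shift_re a0 s t) - X0 - t%:C *: D) <= cc * t ^+ 2.
  move=> t ht.
  have hsh : forall j, cabs (shift_re a0 s t j) < eps.
    move=> j; change (nc (a0 j + (if j == s then t else 0))%:C < eps); rewrite ncR.
    apply: le_lt_trans (ler_normD _ _) _.
    have : `|(if j == s then t else 0)| <= `|t| by case: ifP; rewrite ?normr0.
    by move=> h; apply: (h_sum _ _ _ _ _ (ha0e j) h ht).
  have [opXt solXt _] := hX _ hsh.
  set Xt := X (shift_re a0 s t).
  have mXt : mn Xt <= K0 := opnorm_mn opXt.
  set B := t%:C *: A s.
  have hPt : Pa A (shift_re a0 s t) = P + B := lincomb_shift A a0 s t.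
  have hAt : Aa A b (shift_re a0 s t) = 1%:M - (B + B) by rewrite Aa_shift hAa.
  have adjPt : adjmx (Pa A (shift_re a0 s t)) = Pa A (shift_re a0 s t) :=
    adj_real (fun j => a0 j + (if j == s then t else 0)) hA.
  have eqt : (P + B) * (Xt * Xt) + (1 - (B + B)) * Xt + (P + B) = 0.
    by move: solXt; rewrite /solves_eq adjPt hPt hAt idmxE -!mulmxE.
  have hk := key' _ _ _ _ _ eqt eq0.
  set E := Xt - X0.
  have hphiE : phimap P X0 E = - (B *m ((1%:M - Xt) *m (1%:M - Xt))) - P *m (E *m E).
    by rewrite /phimap !mulmxE idmxE.
  pose T := `|t|.
  have T0 : 0 <= T := normr_ge0 t.
  have mB : mn B <= T * SA.
    rewrite /B mnZ ncR; apply: ler_wpM2l => //.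
  pose e := mn E.
  have e0 : 0 <= e := mn_ge0 E.
  have mE : e <= 2 * K0.
    apply: le_trans (mnB _ _) _; apply: le_trans (lerD mXt mX0) _.
    have two : K0 + K0 = 2 * K0 by ring.
    by rewrite two.
  have mUt : mn (1%:M - Xt) <= Kn := mU _ mXt.
  have mU0 : mn (1%:M - X0) <= Kn := mU _ mX0.
  have mBW : mn (B *m ((1%:M - Xt) *m (1%:M - Xt))) <= T * SA * C1.
    apply: le_trans (mnM _ _) _; apply: ler_pM => //; first exact: mn_ge0.
      exact: mn_ge0.
    apply: le_trans (mnM _ _) _; apply: ler_pM => //; exact: mn_ge0.
  have mPEE : mn (P *m (E *m E)) <= p * (e * e).
    apply: le_trans (mnM _ _) _; apply: ler_wpM2l => //; exact: mnM.
  have mphiE : mn (phimap P X0 E) <= T * SA * C1 + p * (e * e).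
    by rewrite hphiE; apply: le_trans (mnB _ _) _; rewrite mnN; apply: lerD.
  have hE1 := phiB E.
  have f1 : p * (e * e) <= p * (e * (2 * K0)).
    by apply: ler_wpM2l => //; apply: ler_wpM2l.
  have f2 := ler_wpM2r e0 hp1.
  have hE : e <= 3 * (T * SA * C1).
    apply: (@realE1 _ e p K0 (T * SA * C1) (mn (phimap P X0 E))) => //.
    by apply: mulr_ge0; [apply: mulr_ge0 => //; apply: ltW|apply: mulr_ge0].
  set G := E - t%:C *: D.
  have hphiG : phimap P X0 G = B *m (W - (1%:M - Xt) *m (1%:M - Xt)) - P *m (E *m E).
    rewrite /G linearB linearZ /= hphiE hD scalerN scalemxAl -/B [in RHS]mulmxBr.
    by rewrite opprK addrC addrA.
  have hdiff : W - (1%:M - Xt) *m (1%:M - Xt) = (1%:M - X0) *m E + E *m (1%:M - Xt).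
    have hUV : (1%:M - X0) - (1%:M - Xt) = E.
      by rewrite /E opprB addrC addrA subrK.
    by rewrite /W !mulmxE sqdiff -!mulmxE hUV.
  have mdiff : mn (W - (1%:M - Xt) *m (1%:M - Xt)) <= 2 * Kn * e.
    rewrite hdiff; apply: le_trans (mnD _ _) _.
    have h1 : mn ((1%:M - X0) *m E) <= Kn * e.
      by apply: le_trans (mnM _ _) _; apply: ler_wpM2r.
    have h2 : mn (E *m (1%:M - Xt)) <= e * Kn.
      by apply: le_trans (mnM _ _) _; apply: ler_wpM2l.
    have two : Kn * e + e * Kn = 2 * Kn * e by ring.
    by rewrite -two; apply: lerD.
  have mphiG : mn (phimap P X0 G) <= T * SA * (2 * Kn) * e + p * (e * e).
    rewrite hphiG; apply: le_trans (mnB _ _) _; apply: lerD => //.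
    apply: le_trans (mnM _ _) _.
    have -> : T * SA * (2 * Kn) * e = (T * SA) * (2 * Kn * e) by ring.
    by apply: ler_pM => //; apply: mn_ge0.
  have hG1 := phiB G.
  have Q0 : 0 <= T * SA * C1.
    by apply: mulr_ge0; [apply: mulr_ge0 => //; apply: ltW|apply: mulr_ge0].
  have a0' : 0 <= T * SA * (2 * Kn).
    by apply: mulr_ge0; [apply: mulr_ge0 => //; apply: ltW|apply: mulr_ge0].
  have h1 : T * SA * (2 * Kn) * e <= T * SA * (2 * Kn) * (3 * (T * SA * C1)).
    exact: ler_wpM2l.
  have h2 : p * (e * e) <= e * e.
    by apply: ler_piMl => //; [apply: mulr_ge0 | apply: h_le1].
  have h3 : e * e <= (3 * (T * SA * C1)) * (3 * (T * SA * C1)).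
    by apply: ler_pM.
  have hT2 : t ^+ 2 = T * T by rewrite /T -expr2 real_normK ?num_real.
  have fin : 2 * (T * SA * (2 * Kn) * (3 * (T * SA * C1)) +
       (3 * (T * SA * C1)) * (3 * (T * SA * C1))) + T * T = cc * t ^+ 2.
    by rewrite hT2 /cc /C1; ring.
  rewrite -fin.
  have TT : 0 <= T * T by apply: mulr_ge0.
  by apply: (@realE2 _ (mn G) (mn (phimap P X0 G))
    (T * SA * (2 * Kn) * e) (T * SA * (2 * Kn) * (3 * (T * SA * C1)))
    (p * (e * e)) (e * e) ((3 * (T * SA * C1)) * (3 * (T * SA * C1))) (T * T)).
exists D; split => //; last by exists N.
have cc0 : 0 < cc.
  have SA0 : 0 <= SA by apply: ltW.
  have C10 : 0 <= C1 by apply: mulr_ge0.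
  have hc1 : 0 <= 6 * SA * SA * C1 * (2 * Kn) + 18 * SA * SA * C1 * C1.
    by apply: addr_ge0; repeat apply: mulr_ge0 => //.
  by apply: (le_lt_trans hc1); rewrite /cc ltrDl ltr01.
have e2 : 0 < eps / 2 by apply: divr_gt0.
move=> i j; split.
  apply: (deriv_quad (c := cc) (r := eps / 2)) => // t ht /=.
  rewrite sh0 -ReL; apply: le_trans (ncRe _) _; apply: le_trans (bnd t ht).
  by have := mn_entry (X (shift_re a0 s t) - X0 - t%:C *: D) i j; rewrite !mxE.
apply: (deriv_quad (c := cc) (r := eps / 2)) => // t ht /=.
rewrite sh0 -ImL; apply: le_trans (ncIm _) _; apply: le_trans (bnd t ht).
by have := mn_entry (X (shift_re a0 s t) - X0 - t%:C *: D) i j; rewrite !mxE.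
Qed.
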